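(* In the setting of the context, regard the error exponent $K=K(a)$ as a function of the correlation coefficient $a\in[0,1]$ with $\Pi_0$ and $\sigma^2$ fixed. If $\Gamma=\Pi_0/\sigma^2>1$, then $K(a)$ is monotonically decreasing in $a$ on $[0,1]$; in particular its maximum is attained at $a=0$, where $K(0)=D(\mathcal N(0,1)\|\mathcal N(0,1+\Gamma))$.
   Context: Model: fix $a\in[0,1]$, $\Pi_0>0$, $\sigma^2>0$. The signal is a stationary Gaussian first-order autoregressive sequence $s_{i+1}=a s_i+u_i$, $i\ge1$, with $s_1\sim\mathcal N(0,\Pi_0)$ and $u_i$ i.i.d. $\mathcal N(0,Q)$, $Q=\Pi_0(1-a^2)$, independent of $s_1$. Observations follow $H_0: y_i=w_i$ or $H_1: y_i=s_i+w_i$, $w_i$ i.i.d. $\mathcal N(0,\sigma^2)$ independent of the signal; $\Gamma=\Pi_0/\sigma^2$ is the SNR. The error exponent $K$ is $-\lim_{n\to\infty}\frac1n\log P_M(n)$, where $P_M(n)$ is the miss probability of the level-$\alpha$ Neyman–Pearson detector based on $y_1,\dots,y_n$ (independent of $\alpha\in(0,1)$); explicitly $K=\frac{1}{2\pi}\int_0^{2\pi} D(\mathcal N(0,\sigma^2)\|\mathcal N(0,S_y(\omega)))\,d\omega$ with $S_y(\omega)=\sigma^2+\frac{\Pi_0(1-a^2)}{1-2a\cos\omega+a^2}$, $D$ the Kullback–Leibler divergence. *)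

(* Defs.v *)
From Stdlib Require Import Reals.
From Coquelicot Require Import Coquelicot.
Open Scope R_scope.

(* Kullback-Leibler divergence D(N(0,s1) || N(0,s2)) between centred
   Gaussians with variances s1, s2 > 0 (standard closed form). *)
Definition KL_gauss (s1 s2 : R) : R :=
  / 2 * (s1 / s2 - 1 - ln (s1 / s2)).

Definition S_y (Pi0 sigma2 a w : R) : R :=
  sigma2 + Pi0 * (1 - a ^ 2) / (1 - 2 * a * cos w + a ^ 2).

Definition K_exp (Pi0 sigma2 a : R) : R :=
  / (2 * PI) * RInt (fun w => KL_gauss sigma2 (S_y Pi0 sigma2 a w)) 0 (2 * PI).

(* Main.v *)
Require Import Defs.
From Stdlib Require Import Reals.
From Coquelicot Require Import Coquelicot.
From Stdlib Require Import Reals Lra Psatz FunctionalExtensionality.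
From Coquelicot Require Import Coquelicot.
Open Scope R_scope.
Lemma RInt_comp_linR (f : R -> R) u v a b : ex_RInt f (u*a+v) (u*b+v) ->
  RInt (fun y => u * f (u*y+v)) a b = RInt f (u*a+v) (u*b+v).
Proof. intros H. exact (RInt_comp_lin f u v a b H). Qed.
Lemma RInt_scalR (f : R -> R) a b l : ex_RInt f a b -> RInt (fun x => l * f x) a b = l * RInt f a b.
Proof. intros H. exact (RInt_scal f a b l H). Qed.
Lemma RInt_ChaslesR (f : R -> R) a b c : ex_RInt f a b -> ex_RInt f b c -> RInt f a b + RInt f b c = RInt f a c.
Proof. intros H1 H2. exact (RInt_Chasles f a b c H1 H2). Qed.
Lemma RInt_plusR (f g : R -> R) a b : ex_RInt f a b -> ex_RInt g a b -> RInt (fun x => f x + g x) a b = RInt f a b + RInt g a b.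
Proof. intros H1 H2. exact (RInt_plus f g a b H1 H2). Qed.
Lemma RInt_minusR (f g : R -> R) a b : ex_RInt f a b -> ex_RInt g a b -> RInt (fun x => f x - g x) a b = RInt f a b - RInt g a b.
Proof. intros H1 H2. exact (RInt_minus f g a b H1 H2). Qed.
Lemma RInt_constR a b (c : R) : RInt (fun _ => c) a b = (b - a) * c.
Proof. exact (RInt_const a b c). Qed.
Lemma ex_RInt_contR (f : R -> R) a b : (forall z, Rmin a b <= z <= Rmax a b -> continuous f z) -> ex_RInt f a b.
Proof. intros H. exact (ex_RInt_continuous f a b H). Qed.
Ltac req := match goal with |- @eq _ ?x ?y => change (@eq R x y) end.
Lemma cont_lin (u v z : R) : continuous (fun y => u*y+v) z.
Proof. apply (@ex_derive_continuous R_AbsRing R_NormedModule). auto_derive. auto. Qed.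
Lemma cont_comp_lin (f : R -> R) u v z : (forall x, continuous f x) -> continuous (fun y => f (u*y+v)) z.
Proof. intros Hc. apply (@continuous_comp R_UniformSpace R_UniformSpace R_UniformSpace (fun y => u*y+v) f z).
 apply cont_lin. apply Hc. Qed.

Lemma shift2PI (f : R -> R) (Hc : forall x, continuous f x) (Hp : forall x, f (x + 2*PI) = f x) a b : RInt f (a + 2*PI) (b + 2*PI) = RInt f a b.
Proof.
  pose (ex := fun a b => ex_RInt_contR f a b (fun z _ => Hc z)).
  replace (a + 2*PI) with (1*a+2*PI) by ring. replace (b + 2*PI) with (1*b+2*PI) by ring.
  rewrite <- RInt_comp_linR; [|apply ex].
  apply RInt_ext. intros x _. rewrite !Rmult_1_l. apply Hp.
Qed.

Lemma per_shiftPI (f : R -> R) (Hc : forall x, continuous f x) (Hp : forall x, f (x + 2*PI) = f x) : RInt (fun w => f (w + PI)) 0 (2*PI) = RInt f 0 (2*PI).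
Proof.
  pose (ex := fun a b => ex_RInt_contR f a b (fun z _ => Hc z)).
  transitivity (RInt f (1*0+PI) (1*(2*PI)+PI)).
  { rewrite <- RInt_comp_linR; [|apply ex]. apply RInt_ext. intros x _. rewrite !Rmult_1_l. reflexivity. }
  replace (1*0+PI) with PI by ring. replace (1*(2*PI)+PI) with (PI + 2*PI) by ring.
  rewrite <- (RInt_ChaslesR f PI (2*PI) (PI+2*PI)); try apply ex.
  replace (2*PI) with (0 + 2*PI) at 2 by ring.
  rewrite (shift2PI f Hc Hp).
  rewrite <- (RInt_ChaslesR f 0 PI (2*PI)); try apply ex. apply Rplus_comm.
Qed.

Lemma per_double (f : R -> R) (Hc : forall x, continuous f x) (Hp : forall x, f (x + 2*PI) = f x) : RInt (fun w => f (2 * w)) 0 (2*PI) = RInt f 0 (2*PI).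
Proof.
  pose (ex := fun a b => ex_RInt_contR f a b (fun z _ => Hc z)).
  assert (Hc2 : ex_RInt (fun y => f (2*y+0)) 0 (2*PI)).
  { apply (ex_RInt_contR (fun y => f (2*y+0))). intros z _. apply cont_comp_lin, Hc. }
  assert (H := RInt_comp_linR f 2 0 0 (2*PI) (ex _ _)).
  rewrite (RInt_scalR (fun y => f (2*y+0)) 0 (2*PI) 2 Hc2) in H.
  rewrite (RInt_ext (fun y => f (2*y+0)) (fun w => f (2*w))) in H.
  2:{ intros; rewrite Rplus_0_r; reflexivity. }
  replace (2*0+0) with 0 in H by ring. replace (2*(2*PI)+0) with (2*PI + 2*PI) in H by ring.
  rewrite <- (RInt_ChaslesR f 0 (2*PI) (2*PI+2*PI)) in H; try apply ex.
  replace (RInt f (2*PI) (2*PI+2*PI)) with (RInt f (0+2*PI) (2*PI+2*PI)) in H by (f_equal; ring).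
  rewrite (shift2PI f Hc Hp) in H.
  lra.
Qed.
Definition h (b w : R) := 1 + b^2 - 2*b*cos w.

Lemma abs_cos_mul c w : Rabs (c * cos w) <= Rabs c.
Proof. rewrite Rabs_mult. pose proof (COS_bound w). pose proof (Rabs_pos c).
  assert (Rabs (cos w) <= 1) by (apply Rabs_le; lra). nra. Qed.

Lemma h_bounds b c w : Rabs c <= Rabs b -> Rabs b < 1 ->
  (1 - Rabs b)^2 <= h c w <= (1 + Rabs b)^2.
Proof. intros H1 H2. unfold h. pose proof (abs_cos_mul c w) as H3.
  assert (E : c^2 = Rabs c ^2) by (rewrite pow2_abs; reflexivity).
  pose proof (Rabs_pos c). apply Rabs_le_between in H3. nra. Qed.

Lemma h_pos b w : Rabs b < 1 -> 0 < h b w.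
Proof. intros H. destruct (h_bounds b b w (Rle_refl _) H). pose proof (Rabs_pos b). nra. Qed.

Lemma h_per b x : h b (x + 2*PI) = h b x.
Proof. unfold h. rewrite cos_plus, cos_2PI, sin_2PI. ring. Qed.

Lemma h_mul b w : h b w * h b (w + PI) = h (b^2) (2*w).
Proof. unfold h. rewrite neg_cos, cos_2a_cos. ring. Qed.

Lemma h_sum b w : h b w + h b (w + PI) = 2 * (1 + b^2).
Proof. unfold h. rewrite neg_cos. ring. Qed.

Lemma cont_lnh b x : Rabs b < 1 -> continuous (fun w => ln (h b w)) x.
Proof. intros Hb. apply (@ex_derive_continuous R_AbsRing R_NormedModule).
  pose proof (h_pos b x Hb). unfold h in *. auto_derive. lra. Qed.

Lemma cont_invh b x : Rabs b < 1 -> continuous (fun w => / h b w) x.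
Proof. intros Hb. apply (@ex_derive_continuous R_AbsRing R_NormedModule).
  pose proof (h_pos b x Hb). unfold h in *. auto_derive. lra. Qed.

Lemma ex_lnh b x y : Rabs b < 1 -> ex_RInt (fun w => ln (h b w)) x y.
Proof. intros Hb. apply ex_RInt_contR. intros; apply cont_lnh, Hb. Qed.
Lemma ex_invh b x y : Rabs b < 1 -> ex_RInt (fun w => / h b w) x y.
Proof. intros Hb. apply ex_RInt_contR. intros; apply cont_invh, Hb. Qed.

Lemma abs_sq_lt1 b : Rabs b < 1 -> Rabs (b^2) < 1.
Proof. intros Hb. rewrite <- RPow_abs. pose proof (Rabs_pos b). nra. Qed.

Lemma ex_shift (f : R -> R) : (forall x, continuous f x) -> ex_RInt (fun w => f (w + PI)) 0 (2*PI).
Proof. intros Hc. apply ex_RInt_contR. intros z _.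
  assert (E : (fun w => f (w + PI)) = (fun w => f (1*w + PI))) by (apply functional_extensionality; intros; rewrite Rmult_1_l; reflexivity).
  rewrite E. apply cont_comp_lin, Hc. Qed.

Definition F b : R := RInt (fun w => ln (h b w)) 0 (2*PI).
Definition G b : R := RInt (fun w => / h b w) 0 (2*PI).

Lemma F_sq b : Rabs b < 1 -> F (b^2) = 2 * F b.
Proof. intros Hb. pose proof (abs_sq_lt1 b Hb) as Hb2. unfold F.
  rewrite <- (per_double (fun w => ln (h (b^2) w))).
  2: intros; apply cont_lnh, Hb2. 2: intros; rewrite h_per; reflexivity.
  rewrite (RInt_ext _ (fun w => ln (h b w) + ln (h b (w + PI)))).
  2:{ intros x _. rewrite <- h_mul. rewrite ln_mult; try apply h_pos; auto. }
  rewrite RInt_plusR. 2: apply ex_lnh, Hb.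
  2: apply (ex_shift (fun w => ln (h b w))); intros; apply cont_lnh, Hb.
  rewrite (per_shiftPI (fun w => ln (h b w))). req; ring.
  intros; apply cont_lnh, Hb. intros; rewrite h_per; reflexivity.
Qed.

Lemma ex_double (f : R -> R) : (forall x, continuous f x) -> ex_RInt (fun w => f (2 * w)) 0 (2*PI).
Proof. intros Hc. apply ex_RInt_contR. intros z _.
  assert (E : (fun w => f (2*w)) = (fun w => f (2*w + 0))) by (apply functional_extensionality; intros; rewrite Rplus_0_r; reflexivity).
  rewrite E. apply cont_comp_lin, Hc. Qed.

Lemma G_sq b : Rabs b < 1 -> G b = (1 + b^2) * G (b^2).
Proof. intros Hb. pose proof (abs_sq_lt1 b Hb) as Hb2. unfold G.
  rewrite <- (per_double (fun w => / h (b^2) w)).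
  2: intros; apply cont_invh, Hb2. 2: intros; rewrite h_per; reflexivity.
  assert (E : RInt (fun w => / h b w + / h b (w + PI)) 0 (2*PI) =
              RInt (fun w => (2 * (1 + b^2)) * / h (b^2) (2*w)) 0 (2*PI)).
  { apply RInt_ext. intros x _. rewrite <- h_mul, <- (h_sum b x).
    pose proof (h_pos b x Hb). pose proof (h_pos b (x+PI) Hb). req. field. split; lra. }
  rewrite RInt_plusR in E. 2: apply ex_invh, Hb.
  2: apply (ex_shift (fun w => / h b w)); intros; apply cont_invh, Hb.
  rewrite (per_shiftPI (fun w => / h b w)) in E.
  2: intros; apply cont_invh, Hb. 2: intros; rewrite h_per; reflexivity.
  rewrite RInt_scalR in E. 2: apply (ex_double (fun w => / h (b^2) w)); intros; apply cont_invh, Hb2.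
  revert E. generalize (RInt (fun w => / h b w) 0 (2*PI)). generalize (RInt (fun w => / h (b ^ 2) (2 * w)) 0 (2 * PI)).
  intros. req. simpl in *. lra.
Qed.
Lemma cont_kinvh k b x : Rabs b < 1 -> continuous (fun w => k * / h b w) x.
Proof. intros Hb. apply (@ex_derive_continuous R_AbsRing R_NormedModule).
  pose proof (h_pos b x Hb). unfold h in *. auto_derive. lra. Qed.

Lemma small_zero_g x C r (g : nat -> nat) : Rabs r < 1 -> 0 <= C -> (forall N, (N <= g N)%nat) ->
  (forall n, Rabs x <= C * Rabs (r^(g n))) -> x = 0.
Proof. intros Hr HC Hg H. destruct (Req_dec x 0) as [|Hx]; auto. exfalso.
  pose proof (Rabs_pos_lt x Hx) as Hx'.
  destruct (pow_lt_1_zero r Hr (Rabs x / (C+1))) as [N HN].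
  { apply Rdiv_lt_0_compat; lra. }
  specialize (HN (g N) (Hg N)). specialize (H N).
  pose proof (Rabs_pos (r ^ g N)).
  assert (Rabs (r^g N) * (C+1) < Rabs x).
  { apply (Rmult_lt_compat_r (C+1)) in HN; [|lra]. unfold Rdiv in HN. rewrite Rmult_assoc, Rinv_l in HN; lra. }
  nra. Qed.

Lemma pow_abs_le1 b k : Rabs b <= 1 -> Rabs (b^k) <= 1.
Proof. intros H. rewrite <- RPow_abs. induction k; simpl; [lra|]. pose proof (Rabs_pos b).
  pose proof (pow_le (Rabs b) k H0). nra. Qed.

Lemma abs_pow2n b n : Rabs b < 1 -> Rabs (b^(2^n)) <= Rabs b.
Proof. intros Hb. pose proof (Nat.pow_gt_lin_r 2 n ltac:(lia)).
  destruct (2^n)%nat as [|k] eqn:E; [lia|]. simpl. rewrite Rabs_mult.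
  pose proof (pow_abs_le1 b k ltac:(lra)). pose proof (Rabs_pos b). nra. Qed.

Lemma pow2n_S b n : b^(2^(S n)) = (b^(2^n))^2.
Proof. rewrite Nat.pow_succ_r', Nat.mul_comm, pow_mult. reflexivity. Qed.

Lemma abs_pow2n_lt b n : Rabs b < 1 -> Rabs (b^(2^n)) < 1.
Proof. intros Hb. pose proof (abs_pow2n b n Hb). lra. Qed.

Lemma F_iter b n : Rabs b < 1 -> F (b^(2^n)) = 2^n * F b.
Proof. intros Hb. induction n.
  - simpl. rewrite Rmult_1_r. ring.
  - rewrite pow2n_S, F_sq, IHn by (apply abs_pow2n_lt; auto). simpl. ring. Qed.

Lemma F_bound b c : Rabs c <= Rabs b -> Rabs b < 1 ->
  Rabs (F c) <= 2*PI * (Rabs (ln ((1 - Rabs b)^2)) + Rabs (ln ((1 + Rabs b)^2))).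
Proof. intros H1 H2. unfold F. 
  eapply Rle_trans; [apply abs_RInt_le_const with (M := Rabs (ln ((1 - Rabs b)^2)) + Rabs (ln ((1 + Rabs b)^2))) | right; ring]. pose proof PI_RGT_0; lra. apply ex_lnh; lra.
  intros t _. destruct (h_bounds b c t H1 H2) as [B1 B2].
  pose proof (Rabs_pos b).
  assert (0 < (1 - Rabs b)^2) by (apply pow_lt; lra).
  pose proof (ln_le _ _ H0 B1). pose proof (ln_le _ _ (h_pos c t ltac:(lra)) B2).
  pose proof (Rabs_pos (ln ((1 - Rabs b)^2))). pose proof (Rabs_pos (ln ((1 + Rabs b)^2))).
  pose proof (proj1 (Rabs_le_between (ln ((1 - Rabs b)^2)) _) (Rle_refl _)).
  pose proof (proj1 (Rabs_le_between (ln ((1 + Rabs b)^2)) _) (Rle_refl _)).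
  apply Rabs_le. lra. Qed.

Lemma F_zero b : Rabs b < 1 -> F b = 0.
Proof. intros Hb.
  set (M := Rabs (ln ((1 - Rabs b)^2)) + Rabs (ln ((1 + Rabs b)^2))).
  assert (HM : 0 <= M) by (unfold M; pose proof (Rabs_pos (ln ((1 - Rabs b)^2))); pose proof (Rabs_pos (ln ((1 + Rabs b)^2))); lra).
  apply (small_zero_g _ (2*PI*M) (/2) (fun n => n)).
  - rewrite Rabs_right; lra.
  - pose proof PI_RGT_0; nra.
  - intros; lia.
  - intros n. pose proof (F_bound b (b^(2^n)) (abs_pow2n b n Hb) Hb) as H.
    rewrite F_iter in H by auto. fold M in H. rewrite Rabs_mult in H.
    rewrite (Rabs_right (2^n)) in H by (apply Rle_ge, pow_le; lra).
    rewrite <- RPow_abs, (Rabs_right (/2)) by lra.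
    assert (E : (/2)^n * 2^n = 1) by (rewrite <- Rpow_mult_distr, Rinv_l, pow1; lra).
    pose proof (pow_le (/2) n ltac:(lra)).
    apply (Rmult_le_compat_l ((/2)^n)) in H; auto.
    rewrite <- Rmult_assoc, E in H. lra.
Qed.

Lemma G_iter b n : Rabs b < 1 -> (1 - b^2) * G b = (1 - (b^(2^n))^2) * G (b^(2^n)).
Proof. intros Hb. induction n.
  - simpl. rewrite Rmult_1_r. ring.
  - rewrite IHn, pow2n_S. rewrite (G_sq (b^(2^n))) by (apply abs_pow2n_lt; auto). ring. Qed.

Lemma G_bound b c : Rabs c <= Rabs b -> Rabs b < 1 ->
  Rabs ((1 - c^2) * G c - 2*PI) <= 2*PI * (4 / (1 - Rabs b)^2 * Rabs c).
Proof. intros H1 H2.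
  assert (Ex1 : ex_RInt (fun w => (1 - c^2) * / h c w) 0 (2*PI)).
  { apply ex_RInt_contR; intros; apply cont_kinvh; lra. }
  assert (E : (1 - c^2) * G c - 2*PI = RInt (fun w => (1-c^2) * / h c w - 1) 0 (2*PI)).
  { rewrite (RInt_minusR _ _ _ _ Ex1 (ex_RInt_const _ _ _)).
    rewrite RInt_scalR by (apply ex_invh; lra). rewrite RInt_constR. unfold G. ring. }
  rewrite E.
  eapply Rle_trans; [apply abs_RInt_le_const with (M := 4 / (1 - Rabs b)^2 * Rabs c) | right; ring]. pose proof PI_RGT_0; lra.
  apply (ex_RInt_minus (V := R_NormedModule)). exact Ex1. apply ex_RInt_const.
  intros t _. destruct (h_bounds b c t H1 H2) as [B1 B2].
  pose proof (h_pos c t ltac:(lra)) as Hh. pose proof (Rabs_pos b). pose proof (Rabs_pos c).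
  assert (Hm : 0 < (1 - Rabs b)^2) by (apply pow_lt; lra).
  replace ((1 - c^2) * / h c t - 1) with ((2*c*cos t - 2*c^2) * / h c t) by (unfold h in *; field; lra).
  rewrite Rabs_mult, (Rabs_right (/ h c t)) by (apply Rle_ge, Rlt_le, Rinv_0_lt_compat; lra).
  assert (Rabs (2*c*cos t - 2*c^2) <= 4 * Rabs c).
  { pose proof (abs_cos_mul c t). 
    assert (Ec : c^2 = Rabs c ^2) by (rewrite pow2_abs; reflexivity).
    eapply Rle_trans. apply Rabs_triang. rewrite Rabs_Ropp, !Rabs_mult, (Rabs_right 2) by lra.
    rewrite <- RPow_abs. assert (Rabs (cos t) <= 1) by (apply Rabs_le; pose proof (COS_bound t); lra).
    pose proof (Rabs_pos (cos t)). nra. }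
  assert (/ h c t <= / (1 - Rabs b)^2) by (apply Rinv_le_contravar; lra).
  pose proof (Rinv_0_lt_compat _ Hm). pose proof (Rabs_pos (2*c*cos t - 2*c^2)).
  unfold Rdiv. 
  apply Rle_trans with (4 * Rabs c * / h c t). apply Rmult_le_compat_r; [apply Rlt_le, Rinv_0_lt_compat; lra| lra].
  replace (4 * / (1 - Rabs b) ^ 2 * Rabs c) with (4 * Rabs c * / (1 - Rabs b)^2) by ring.
  apply Rmult_le_compat_l; lra.
Qed.

Lemma G_val b : Rabs b < 1 -> G b = 2*PI / (1 - b^2).
Proof. intros Hb.
  assert (Hb2 : 0 < 1 - b^2) by (assert (E : b^2 = Rabs b ^2) by (rewrite pow2_abs; reflexivity); pose proof (Rabs_pos b); nra).
  assert (E : (1 - b^2) * G b - 2*PI = 0).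
  { apply (small_zero_g _ (2*PI*(4 / (1 - Rabs b)^2)) b (fun n => 2^n)%nat Hb).
    - assert (0 < (1 - Rabs b)^2) by (apply pow_lt; lra). pose proof PI_RGT_0.
      apply Rmult_le_pos; [lra|]. apply Rlt_le, Rdiv_lt_0_compat; lra.
    - intros N. pose proof (Nat.pow_gt_lin_r 2 N ltac:(lia)). lia.
    - intros n. rewrite (G_iter b n Hb). rewrite Rmult_assoc.
      apply G_bound; [apply abs_pow2n| ]; auto. }
  replace (G b) with (((1-b^2)*G b)/(1-b^2)) by (field; lra).
  replace ((1-b^2)*G b) with (2*PI) by lra. reflexivity.
Qed.
Definition Af g a := 1 + a^2 + g*(1-a^2).
Definition lam g a := (Af g a + sqrt (Af g a ^2 - 4*a^2)) / 2.
Definition kf g l := / 2 * (ln l - g*(l-1)/((g-1)*l + g + 1)).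

Lemma disc_nn g a : 1 < g -> 0 <= a <= 1 -> 0 <= Af g a ^2 - 4*a^2.
Proof. intros Hg Ha. unfold Af.
  assert (0 <= g*(1-a^2)) by (apply Rmult_le_pos; nra).
  assert (0 <= 1 + a^2 + g*(1-a^2) - 2*a) by nra.
  assert (0 <= 1 + a^2 + g*(1-a^2) + 2*a) by nra.
  replace ((1 + a^2 + g*(1-a^2))^2 - 4*a^2) with ((1 + a^2 + g*(1-a^2) - 2*a)*(1 + a^2 + g*(1-a^2) + 2*a)) by ring.
  apply Rmult_le_pos; auto. Qed.

Lemma lam_quad g a : 1 < g -> 0 <= a <= 1 -> lam g a ^2 - Af g a * lam g a + a^2 = 0.
Proof. intros Hg Ha. pose proof (sqrt_sqrt _ (disc_nn g a Hg Ha)). unfold lam.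
  set (s := sqrt (Af g a ^2 - 4*a^2)) in *. nra. Qed.

Lemma Af_ge2 g a : 1 < g -> 0 <= a <= 1 -> 2 <= Af g a.
Proof. intros. unfold Af. assert (0 <= (g-1)*(1-a^2)) by (apply Rmult_le_pos; nra). nra. Qed.

Lemma lam_ge1 g a : 1 < g -> 0 <= a <= 1 -> 1 <= lam g a.
Proof. intros Hg Ha. pose proof (sqrt_pos (Af g a ^2 - 4*a^2)). pose proof (Af_ge2 g a Hg Ha). unfold lam. lra. Qed.

Lemma lam_gt1 g a : 1 < g -> 0 <= a < 1 -> 1 < lam g a.
Proof. intros Hg Ha. pose proof (sqrt_pos (Af g a ^2 - 4*a^2)).
  assert (0 < (g-1)*(1-a^2)) by (apply Rmult_lt_0_compat; nra).
  assert (2 < Af g a) by (unfold Af; nra). unfold lam. lra. Qed.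

Lemma lam_gt_a g a : 1 < g -> 0 <= a < 1 -> a < lam g a.
Proof. intros Hg Ha. pose proof (sqrt_pos (Af g a ^2 - 4*a^2)).
  assert (0 <= g*(1-a^2)) by (apply Rmult_le_pos; nra).
  assert (2*a < Af g a) by (unfold Af; nra). unfold lam. lra. Qed.

Lemma lam_le g a : 1 < g -> 0 <= a <= 1 -> lam g a <= 1 + g.
Proof. intros Hg Ha. unfold lam.
  assert (0 <= (g-1)*a^2) by (apply Rmult_le_pos; nra).
  assert (H1 : 0 <= 2 + 2*g - Af g a) by (unfold Af; nra).
  assert (sqrt (Af g a ^2 - 4*a^2) <= 2 + 2*g - Af g a).
  { rewrite <- (sqrt_pow2 (2 + 2*g - Af g a)) by exact H1. apply sqrt_le_1_alt. unfold Af.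
    assert (0 <= (1+g)*((g-1)*a^2)) by (apply Rmult_le_pos; nra).
    replace ((2 + 2 * g - (1 + a ^ 2 + g * (1 - a ^ 2))) ^ 2) with
      ((1 + a ^ 2 + g * (1 - a ^ 2)) ^ 2 - 4 * a ^ 2 + (4*((1+g)*((g-1)*a^2)) + 4*a^2)) by ring.
    nra. }
  lra. Qed.

Lemma lam_1 g : lam g 1 = 1.
Proof. unfold lam, Af. replace ((1 + 1^2 + g*(1-1^2))^2 - 4*1^2) with 0 by ring. rewrite sqrt_0. field. Qed.

Lemma lam_decr g a b : 1 < g -> 0 <= a -> a < b -> b <= 1 -> lam g b < lam g a.
Proof. intros Hg H1 H2 H3.
  assert (Ht : a^2 < b^2) by nra.
  assert (HA : Af g b < Af g a) by (unfold Af; nra).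
  pose proof (Af_ge2 g b Hg ltac:(lra)).
  assert (sqrt (Af g b ^2 - 4*b^2) <= sqrt (Af g a ^2 - 4*a^2)) by (apply sqrt_le_1_alt; nra).
  unfold lam. lra. Qed.

Lemma ln_strict x : 0 < x -> x <> 1 -> ln x < x - 1.
Proof. intros Hx H1. assert (ln x <> 0).
  { intros E. apply H1. rewrite <- (exp_ln x Hx), E, exp_0. reflexivity. }
  pose proof (exp_ineq1 _ H). rewrite exp_ln in H0 by lra. lra. Qed.

Lemma kf_incr g x y : 1 < g -> 1 <= x -> x < y -> y <= 1 + g -> kf g x < kf g y.
Proof. intros Hg H1 H2 H3. unfold kf.
  assert (Hl : ln x - ln y < x / y - 1).
  { rewrite <- ln_div by lra. apply ln_strict. apply Rdiv_lt_0_compat; lra.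
    intros E. assert (x = y). { unfold Rdiv in E. apply (f_equal (fun z => z * y)) in E.
      rewrite Rmult_assoc, Rinv_l, Rmult_1_r, Rmult_1_l in E; lra. } lra. }
  set (dx := (g-1)*x + g + 1). set (dy := (g-1)*y + g + 1).
  assert (Hdx : 2*g <= dx) by (unfold dx; nra). assert (Hdy : g*y <= dy) by (unfold dy; nra).
  assert (E1 : g*(y-1)/dy - g*(x-1)/dx = 2*g^2*(y-x)/(dx*dy)) by (unfold dx, dy; field; nra).
  assert (E2 : (y - x)/y - 2*g^2*(y-x)/(dx*dy) = (y-x)*(dx*dy - 2*g^2*y)/(y*(dx*dy))) by (field; nra).
  assert (0 <= (y-x)*(dx*dy - 2*g^2*y)/(y*(dx*dy))).
  { assert (2*g*(g*y) <= dx*dy) by (apply Rmult_le_compat; nra).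
    apply Rdiv_le_0_compat. apply Rmult_le_pos. lra. nra. apply Rmult_lt_0_compat. lra. nra. }
  assert (E3 : x / y - 1 = - ((y - x)/y)) by (field; lra).
  lra. Qed.
Lemma K_formula_lt Pi0 sigma2 a : 0 < Pi0 -> 0 < sigma2 -> Pi0/sigma2 > 1 -> 0 <= a < 1 ->
  K_exp Pi0 sigma2 a = kf (Pi0/sigma2) (lam (Pi0/sigma2) a).
Proof. intros HP Hs Hg Ha. set (g := Pi0/sigma2) in *. set (l := lam g a).
  assert (Hl1 : 1 < l) by (apply lam_gt1; lra).
  assert (Hla : a < l) by (apply lam_gt_a; lra).
  assert (Hq : l^2 - Af g a * l + a^2 = 0) by (apply lam_quad; lra).
  set (b := a / l).
  assert (Hb : Rabs b < 1).
  { unfold b. rewrite Rabs_right. apply (Rmult_lt_reg_r l); [lra|]. unfold Rdiv. rewrite Rmult_assoc, Rinv_l; lra.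
    apply Rle_ge, Rdiv_le_0_compat; lra. }
  assert (Ha' : Rabs a < 1) by (rewrite Rabs_right; lra).
  set (k := - (g*(1-a^2)/l)).
  assert (Hpt : forall w, KL_gauss sigma2 (S_y Pi0 sigma2 a w) =
     / 2 * (k * / h b w + ln l - ln (h a w) + ln (h b w))).
  { intros w. pose proof (h_pos a w Ha') as HN. pose proof (h_pos b w Hb) as HM.
    assert (HlM : l * h b w = h a w + g*(1-a^2)).
    { unfold h, b. replace (l * (1 + (a/l)^2 - 2*(a/l)*cos w)) with ((l^2 + a^2)/l - 2*a*cos w) by (field; lra).
      replace (l^2 + a^2) with (Af g a * l) by lra. unfold Af. field. lra. }
    assert (Hr : sigma2 / S_y Pi0 sigma2 a w = h a w / (l * h b w)).
    { rewrite HlM. unfold S_y. replace (1 - 2*a*cos w + a^2) with (h a w) by (unfold h; ring).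
      unfold g. field. repeat split; try lra.
      assert (0 <= Pi0 * (1 - a^2)) by (apply Rmult_le_pos; nra).
      assert (0 <= Pi0 / sigma2 * (1 - a^2)) by (apply Rmult_le_pos; [apply Rlt_le, Rdiv_lt_0_compat|]; nra).
      assert (0 < h a w * sigma2) by (apply Rmult_lt_0_compat; lra). lra. }
    unfold KL_gauss. rewrite Hr. rewrite ln_div; [| lra | apply Rmult_lt_0_compat; lra]. rewrite ln_mult by lra.
    assert (X : h a w / (l*h b w) - 1 = k * / h b w).
    { unfold k. replace (h a w) with (l*h b w - g*(1-a^2)) by lra. field. split; lra. }
    replace (h a w / (l * h b w)) with (1 + k * / h b w) by lra. ring. }
  assert (HD1 : 0 < (g-1)*l + g + 1) by nra.
  assert (HD2 : 0 < l^2 - a^2) by nra.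
  assert (I : (1-a^2)*((g-1)*l+g+1)*l = (l-1)*(l^2-a^2)).
  { assert (E0 : (1-a^2)*((g-1)*l+g+1)*l - (l-1)*(l^2-a^2) = -(l+1)*(l^2 - Af g a * l + a^2)) by (unfold Af; ring).
    rewrite Hq in E0. lra. }
  assert (J : (l-1)/((g-1)*l+g+1) = (1-a^2)*l/(l^2-a^2)).
  { replace ((l-1)/((g-1)*l+g+1)) with ((l-1)*(l^2-a^2)/(((g-1)*l+g+1)*(l^2-a^2))) by (field; split; lra).
    replace ((1-a^2)*l/(l^2-a^2)) with ((1-a^2)*((g-1)*l+g+1)*l/(((g-1)*l+g+1)*(l^2-a^2))) by (field; split; lra).
    rewrite I. reflexivity. }
  unfold K_exp.
  rewrite (RInt_ext _ (fun w => /2 * (k * /h b w + ln l - ln (h a w) + ln (h b w)))) by (intros; apply Hpt).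
  rewrite (RInt_scalR (fun w => k * /h b w + ln l - ln (h a w) + ln (h b w))).
  rewrite (RInt_plusR (fun w => k * /h b w + ln l - ln (h a w)) (fun w => ln (h b w))).
  rewrite (RInt_minusR (fun w => k * /h b w + ln l) (fun w => ln (h a w))).
  rewrite (RInt_plusR (fun w => k * /h b w) (fun _ => ln l)).
  rewrite (RInt_scalR (fun w => /h b w)), RInt_constR.
  change (RInt (fun w => / h b w) 0 (2*PI)) with (G b).
  change (RInt (fun w => ln (h a w)) 0 (2*PI)) with (F a).
  change (RInt (fun w => ln (h b w)) 0 (2*PI)) with (F b).
  rewrite G_val, !F_zero by auto.
  unfold kf. replace (g * (l - 1) / ((g - 1) * l + g + 1)) with (g * ((l-1)/((g-1)*l+g+1))) by (field; lra).
  rewrite J. unfold k, b. pose proof PI_RGT_0. field. repeat split; try lra.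
  all: apply ex_RInt_contR; intros x _; apply (@ex_derive_continuous R_AbsRing R_NormedModule);
    pose proof (h_pos a x Ha'); pose proof (h_pos b x Hb); unfold h in *; auto_derive; repeat split; lra.
Qed.

Lemma K_one Pi0 sigma2 : 0 < sigma2 -> K_exp Pi0 sigma2 1 = 0.
Proof. intros Hs. unfold K_exp. rewrite (RInt_ext _ (fun _ => 0)).
  - rewrite RInt_constR. ring.
  - intros x _. unfold KL_gauss, S_y. replace (1 - 1^2) with 0 by ring.
    rewrite Rmult_0_r. replace (0 / (1 - 2 * 1 * cos x + 1 ^ 2)) with 0 by (unfold Rdiv; ring).
    rewrite Rplus_0_r. replace (sigma2 / sigma2) with 1 by (field; lra). rewrite ln_1. req. ring.
Qed.

Lemma K_formula Pi0 sigma2 a : 0 < Pi0 -> 0 < sigma2 -> Pi0/sigma2 > 1 -> 0 <= a <= 1 ->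
  K_exp Pi0 sigma2 a = kf (Pi0/sigma2) (lam (Pi0/sigma2) a).
Proof. intros HP Hs Hg Ha. destruct (Req_dec a 1) as [E|E].
  - subst a. rewrite K_one, lam_1 by auto. unfold kf. rewrite ln_1. unfold Rdiv. ring.
  - apply K_formula_lt; auto. lra.
Qed.

Lemma K_zero Pi0 sigma2 : 0 < Pi0 -> 0 < sigma2 -> K_exp Pi0 sigma2 0 = KL_gauss 1 (1 + Pi0/sigma2).
Proof. intros HP Hs. unfold K_exp.
  rewrite (RInt_ext _ (fun _ => KL_gauss 1 (1 + Pi0/sigma2))).
  - rewrite RInt_constR. pose proof PI_RGT_0. req. field. lra.
  - intros x _. unfold KL_gauss, S_y.
    replace (sigma2 / (sigma2 + Pi0 * (1 - 0 ^ 2) / (1 - 2 * 0 * cos x + 0 ^ 2))) with (1 / (1 + Pi0/sigma2))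
      by (field; lra). reflexivity.
Qed.

Theorem theorem3 (Pi0 sigma2 : R) (hPi0 : 0 < Pi0) (hsigma2 : 0 < sigma2)
  (hGamma : Pi0 / sigma2 > 1) :
  (forall a b : R, 0 <= a -> a < b -> b <= 1 ->
     K_exp Pi0 sigma2 b < K_exp Pi0 sigma2 a) /\
  (forall a : R, 0 <= a <= 1 -> K_exp Pi0 sigma2 a <= K_exp Pi0 sigma2 0) /\
  K_exp Pi0 sigma2 0 = KL_gauss 1 (1 + Pi0 / sigma2).
Proof.
  assert (P1 : forall a b : R, 0 <= a -> a < b -> b <= 1 -> K_exp Pi0 sigma2 b < K_exp Pi0 sigma2 a).
  { intros a b H1 H2 H3. rewrite !K_formula by (auto; lra).
    apply kf_incr. lra. apply lam_ge1; lra. apply lam_decr; lra. apply lam_le; lra. }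
  split; [exact P1|]. split.
  - intros a Ha. destruct (Req_dec a 0) as [E|E]. subst; lra. apply Rlt_le, P1; lra.
  - apply K_zero; auto.
Qed.
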